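(* In the MLR-DMPC setting described in the context, fix a CU $w$, a UAV $i\in\mathcal A$ and a round $k$. If, after the update procedure of round $k$, the information tracker $\mathcal D_{iw}(k)$ is not marked deprecated, then $\mathcal D_{iw}(k)$ contains the true reference trajectory $\hat p_i$ that UAV $i$ is following.
   Context: Setting (MLR-DMPC). There are $N$ UAVs indexed by $\mathcal A=\{1,\dots,N\}$ and $M$ compute units (CUs) indexed by $w\in\{1,\dots,M\}$, $1<M<N$. Time is divided into rounds $k=0,1,2,\dots$ of length $T>0$; each round consists of a computation phase followed by a communication phase in which every device broadcasts at most one message; any message may be lost at any receiver (arbitrary message loss). Nominal model: each UAV $i$ has a nominal system $\dot{\hat x}_i=\hat f_i(\hat x_i,\hat u_i)$, $\hat x_i\in\hat{\mathcal X}$, $\hat u_i\in\hat{\mathcal U}$, with nominal position $\hat p_i=\hat g_{p,i}(\hat x_i)\in\mathbb R^3$. Reference trajectories: in round $k$ UAV $i$ follows a reference $\hat x_i(\tau|k),\hat u_i(\tau|k)$, $\tau\ge 0$, applied at time $t=kT+\tau$. If in the communication phase of round $k$ UAV $i$ receives a trajectory $\hat u_{i,w}(\cdot|k)$ computed by CU $w$, then $\hat u_i(\tau|k+1)=\hat u_{i,w}(\tau+T|k)$; otherwise $\hat u_i(\tau|k+1)=\hat u_i(\tau+T|k)$. Each UAV broadcasts a message containing the metadata (computing CU and round) of the trajectory it currently follows. Information trackers: each CU $w$ keeps, for each UAV $i$, a set $\mathcal D_{iw}(k)$ of candidate trajectories (with metadata) together with a flag up-to-date/deprecated; elements are written $\tilde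 x_i(\cdot|k-1)$, $\tilde p_i(\cdot|k-1)$. Initially all trackers are empty and deprecated. At the start of round $k$, CU $w$ updates using the messages received in round $k-1$: (1) start from $\mathcal D_{iw}(k-1)$; for every UAV $i$ whose message was received, replace its tracker by the single stored trajectory whose metadata matches and mark that tracker up-to-date; (2) if some tracker then has more than one element, mark all trackers deprecated; (3) if fewer than $M$ CU messages were received, mark all trackers deprecated; (4) for every received CU message containing a newly computed trajectory for a UAV $i$, add it to $\mathcal D_{iw}(k)$. If all trackers are up-to-date, the CU runs a DMPC step: all such CUs compute the same set $\mathcal A_{ET}(k)$ of $M$ UAVs (highest priorities after max-consensus), CU $w$ selects the UAV at position $(k+w)\bmod M$ of $\mathcal A_{ET}(k)$ and, if that UAV's tracker has exactly one element, computes and broadcasts a new trajectory for it. Otherwise the CU is in message-loss-recovery mode: it computes no trajectory and instead (in alternate rounds) requests a UAV with a deprecated tracker to rebroadcast its current reference trajectory with metadata. *)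

(* Defs.v *)
From mathcomp Require Import all_boot.
Set Implicit Arguments. Unset Strict Implicit. Unset Printing Implicit Defensive.

Section MLRDMPC.

(* N UAVs ('I_N), M compute units ('I_M).  [Tr] is the (abstract) content of a
   reference trajectory (x-hat, u-hat, p-hat) expressed in ABSOLUTE time
   t = kT + tau, so that the time shift u(tau|k+1) = u(tau+T|k) is the identity
   on this representation. *)
Variables (N M : nat) (Tr : eqType).

(* Metadata: None = initial reference of the UAV, Some (w, k) = computed by CU w
   in round k. *)
Definition meta := option ('I_M * nat).
Definition plan := (meta * Tr)%type.

(* An execution: all the choices the environment / optimizers / channels make. *)
Record env := Env {
  init_traj : 'I_N -> Tr;
  rcvUC : nat -> 'I_N -> 'I_M -> bool;       (* rcvUC k i w : CU w receives UAV i's round-k message *)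
  rcvCC : nat -> 'I_M -> 'I_M -> bool;       (* rcvCC k w' w : CU w receives CU w''s round-k message *)
  rcvCU : nat -> 'I_M -> 'I_N -> bool;       (* rcvCU k w i : UAV i receives CU w's round-k message *)
  rebroadcast : nat -> 'I_N -> bool;
  target : nat -> 'I_M -> 'I_N;              (* UAV selected by CU w in round k (DMPC step) *)
  payload : nat -> 'I_M -> Tr                (* trajectory the optimizer of CU w returns in round k *)
}.

(* State at round k, after the tracker update at the start of round k. *)
Record state := State {
  trk : 'I_M -> 'I_N -> seq plan;            (* D_iw(k) : trk w i *)
  uptodate : 'I_M -> 'I_N -> bool;           (* flag: true = up-to-date, false = deprecated *)
  ref : 'I_N -> plan
}.

Variable e : env.

Definition ndist (s : seq plan) : nat := size (undup s).

Definition computes (s : state) (k : nat) (w : 'I_M) : bool :=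
  [forall j, uptodate s w j] && (ndist (trk s w (target e k w)) == 1).

Definition computed_plan (k : nat) (w : 'I_M) : plan := (Some (w, k), payload e k w).

(* UAV reference for round k+1. *)
Definition new_ref (s : state) (k : nat) (i : 'I_N) : plan :=
  match [pick w | [&& rcvCU e k w i, computes s k w & target e k w == i]] with
  | Some w => computed_plan k w
  | None => ref s i
  end.

Definition matches (s : state) (k : nat) (w : 'I_M) (i : 'I_N) : seq plan :=
  [seq p <- trk s w i ++ (if rebroadcast e k i then [:: ref s i] else [::])
     | p.1 == (ref s i).1].

Definition step1_trk (s : state) (k : nat) (w : 'I_M) (i : 'I_N) : seq plan :=
  if rcvUC e k i w && (matches s k w i != [::]) then matches s k w i else trk s w i.
Definition step1_flag (s : state) (k : nat) (w : 'I_M) (i : 'I_N) : bool :=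
  if rcvUC e k i w && (matches s k w i != [::]) then true else uptodate s w i.

Definition multi (s : state) (k : nat) (w : 'I_M) : bool :=
  [exists j, 1 < ndist (step1_trk s k w j)].
Definition few (s : state) (k : nat) (w : 'I_M) : bool :=
  #|[set w' | rcvCC e k w' w]| < M.

Definition new_trajs (s : state) (k : nat) (w : 'I_M) (i : 'I_N) : seq plan :=
  [seq computed_plan k w' | w' <- enum 'I_M
     & [&& rcvCC e k w' w, computes s k w' & target e k w' == i]].

Definition step (k : nat) (s : state) : state :=
  State (fun w i => step1_trk s k w i ++ new_trajs s k w i)
        (fun w i => [&& step1_flag s k w i, ~~ multi s k w & ~~ few s k w])
        (fun i => new_ref s k i).

Definition state0 : state :=
  State (fun _ _ => [::]) (fun _ _ => false) (fun i => (None, init_traj e i)).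

Fixpoint run (k : nat) : state :=
  match k with 0 => state0 | k'.+1 => step k' (run k') end.

End MLRDMPC.

(* Main.v *)
Require Import Defs.
From mathcomp Require Import all_boot.

Section Proofs.
Variables (N M : nat) (Tr : eqType) (e : env N M Tr).

Definition good (i : 'I_N) (p : plan M Tr) : bool :=
  (p == (None, init_traj e i)) ||
  (if p.1 is Some (w, k) then p == computed_plan e k w else false).

Lemma good_uniq i p q : good i p -> good i q -> p.1 = q.1 -> p = q.
Proof.
rewrite /good => /orP [/eqP -> | Hp] /orP [/eqP -> | Hq] //=.
- by move: Hq; case: q => [[[w k]|] tq] //= _ [].
- by move: Hp; case: p => [[[w k]|] tp] //= _ [].
- move: Hp Hq; case: p => [[[w k]|] tp] //=; case: q => [[[w' k']|] tq] //=.
  by move=> /eqP -> /eqP -> [-> ->].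
Qed.

Lemma inv k : (forall i, good i (ref (run e k) i)) /\
  (forall w i p, p \in trk (run e k) w i -> good i p).
Proof.
elim: k => [|k [IHr IHt]] /=.
  by split=> [i|//]; rewrite /good eqxx.
split.
  move=> i; rewrite /new_ref; case: pickP => [w /and3P [_ _ _]|_ //].
  by apply/orP; right; rewrite /= eqxx.
move=> w i p; rewrite mem_cat => /orP [].
  rewrite /step1_trk; case: ifP => _; last exact: IHt.
  rewrite /matches mem_filter => /andP [_]; rewrite mem_cat => /orP [|]; first exact: IHt.
  by case: (rebroadcast e k i); rewrite ?inE // => /eqP ->.
rewrite /new_trajs => /mapP [w' ]; rewrite mem_filter => /andP [/and3P [_ _ /eqP <-] _] ->.
by apply/orP; right; rewrite /= eqxx.
Qed.

End Proofs.

Theorem lemma1 (N M : nat) (Tr : eqType) (e : env N M Tr) :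
  1 < M < N ->
  forall (k : nat) (w : 'I_M) (i : 'I_N),
    uptodate (run e k) w i -> ref (run e k) i \in trk (run e k) w i.
Proof.
move=> _ k; elim: k => [//|k IH] w i /=.
move=> /and3P [Hf _ Hfew].
have [Hr Ht] := inv N M Tr e k.
rewrite /new_ref; case: pickP => [w0 /and3P [Hrc Hc /eqP Ht0]|Hno].
  rewrite mem_cat; apply/orP; right.
  have Hall : w0 \in [set w' | rcvCC e k w' w].
    move: Hfew; rewrite /few -leqNgt => Hle.
    have /eqP -> : [set w' | rcvCC e k w' w] == [set: 'I_M].
      by rewrite eqEcard subsetT cardsT card_ord Hle.
    by rewrite inE.
  rewrite inE in Hall.
  apply/mapP; exists w0 => //; rewrite mem_filter mem_enum andbT.
  by rewrite Hall Hc Ht0 eqxx.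
rewrite mem_cat; apply/orP; left.
move: Hf; rewrite /step1_flag /step1_trk; case: ifP => [/andP [_ Hne] _|_ H]; last exact: IH.
case Em: (matches e (run e k) k w i) Hne => [//|q s] _.
have Hq : q \in matches e (run e k) k w i by rewrite Em inE eqxx.
move: Hq; rewrite /matches mem_filter => /andP [/eqP Hq1 Hq].
have Hgq : good N M Tr e i q.
  move: Hq; rewrite mem_cat => /orP [|]; first exact: Ht.
  by case: (rebroadcast e k i); rewrite ?inE // => /eqP ->.
have -> : ref (run e k) i = q by exact: (@good_uniq N M Tr e i _ _ (Hr i) Hgq (esym Hq1)).
by rewrite inE eqxx.
Qed.
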